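(* Let $0<\alpha\le2$, $j\ne0$, $V\in C^2(\mathbb{T})$, and $G(x)=p_0+\sum_{k=1}^{n}p_k\cos(2\pi kx)+\sum_{k=1}^nq_k\sin(2\pi kx)$ with $p_k^2+q_k^2>0$ for $1\le k\le n$. If $(m,\overline{H})\in C(\mathbb{T})\times\mathbb{R}$ solves problem (P), then there is $(a_0,\dots,a_n,b_1,\dots,b_n)\in\mathcal{C}$ solving the system (S) such that $$m(x)=\frac{c_j}{\left(a_0+\sum_{k=1}^{n}a_k\cos(2\pi kx)+b_k\sin(2\pi kx)-V(x)\right)^{1/\alpha}},\qquad \overline{H}=a_0-p_0.\tag{$*$}$$ Conversely, if $(a_0,\dots,a_n,b_1,\dots,b_n)\in\mathcal{C}$ solves (S), then $(m,\overline{H})$ defined by $( * )$ solves problem (P).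
   Context: $\mathbb{T}=\mathbb{R}/\mathbb{Z}$. Problem (P): find $(m,\overline{H})\in C(\mathbb{T})\times\mathbb{R}$ with $m>0$, $\int_{\mathbb{T}}m=1$, and $\frac{j^2}{2m(x)^\alpha}+V(x)=\int_{\mathbb{T}}G(x-y)m(y)\,dy+\overline{H}$ for all $x$. Set $c_j=(j^2/2)^{1/\alpha}$; $\phi_\alpha(t)=\frac{c_j\alpha}{\alpha-1}t^{(\alpha-1)/\alpha}$ if $\alpha\ne1$, $\phi_\alpha(t)=c_j\ln t$ if $\alpha=1$ ($t>0$). $\mathcal{C}\subset\mathbb{R}^{2n+1}$ is the set of $(a_0,\dots,a_n,b_1,\dots,b_n)$ with $a_0+\sum_{k=1}^n(a_k\cos(2\pi kx)+b_k\sin(2\pi kx))-V(x)>0$ for all $x\in\mathbb{T}$; on $\mathcal{C}$, $\Phi_\alpha(a_0,\dots,b_n)=\int_{\mathbb{T}}\phi_\alpha\big(a_0+\sum_{k=1}^n(a_k\cos(2\pi ky)+b_k\sin(2\pi ky))-V(y)\big)\,dy$. System (S): $\partial\Phi_\alpha/\partial a_0=1$, $\partial\Phi_\alpha/\partial a_k=\frac{p_ka_k+q_kb_k}{p_k^2+q_k^2}$, $\partial\Phi_\alpha/\partial b_k=\frac{p_kb_k-q_ka_k}{p_k^2+q_k^2}$ for $1\le k\le n$. *)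

(* Defs.v *)
From Stdlib Require Import Reals Lra ClassicalEpsilon.
Open Scope R_scope.

(* Functions on T = R/Z are represented as 1-periodic functions R -> R. *)
Definition periodic1 (f : R -> R) : Prop := forall x, f (x + 1) = f x.

(* Integral over T = integral over [0,1] (Riemann); 0 if not integrable
   (never used in that case: all integrands below are continuous). *)
Definition Rint01 (f : R -> R) : R :=
  match excluded_middle_informative (exists pr : Riemann_integrable f 0 1, True) with
  | left H => RiemannInt (proj1_sig (constructive_indefinite_description _ H))
  | right _ => 0
  end.

Fixpoint sum1 (n : nat) (f : nat -> R) : R :=
  match n with
  | O => 0
  | S n' => sum1 n' f + f (S n')
  end.

Definition trig (n : nat) (a b : nat -> R) (x : R) : R :=
  a 0%nat + sum1 n (fun k => a k * cos (2 * PI * INR k * x) + b k * sin (2 * PI * INR k * x)).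

Definition C2_periodic (V : R -> R) : Prop :=
  periodic1 V /\
  exists V' V'' : R -> R,
    (forall x, derivable_pt_lim V x (V' x)) /\
    (forall x, derivable_pt_lim V' x (V'' x)) /\
    continuity V''.

Definition c_j (alpha j : R) : R := Rpower (j ^ 2 / 2) (1 / alpha).

Definition phi (alpha j : R) (t : R) : R :=
  if Req_EM_T alpha 1 then c_j alpha j * ln t
  else c_j alpha j * alpha / (alpha - 1) * Rpower t ((alpha - 1) / alpha).

Definition inC (n : nat) (V : R -> R) (a b : nat -> R) : Prop :=
  forall x, trig n a b x - V x > 0.

Definition Phi (alpha j : R) (n : nat) (V : R -> R) (a b : nat -> R) : R :=
  Rint01 (fun y => phi alpha j (trig n a b y - V y)).

Definition upd (a : nat -> R) (k : nat) (t : R) : nat -> R :=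
  fun i => if Nat.eqb i k then t else a i.

Definition solvesS (alpha j : R) (n : nat) (V : R -> R) (p q : nat -> R)
    (a b : nat -> R) : Prop :=
  derivable_pt_lim (fun t => Phi alpha j n V (upd a 0 t) b) (a 0%nat) 1 /\
  forall k, (1 <= k <= n)%nat ->
    derivable_pt_lim (fun t => Phi alpha j n V (upd a k t) b) (a k)
      ((p k * a k + q k * b k) / (p k ^ 2 + q k ^ 2)) /\
    derivable_pt_lim (fun t => Phi alpha j n V a (upd b k t)) (b k)
      ((p k * b k - q k * a k) / (p k ^ 2 + q k ^ 2)).

Definition solvesP (alpha j : R) (V G m : R -> R) (H : R) : Prop :=
  continuity m /\ periodic1 m /\ (forall x, 0 < m x) /\ Rint01 m = 1 /\
  forall x, j ^ 2 / (2 * Rpower (m x) alpha) + V x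
            = Rint01 (fun y => G (x - y) * m y) + H.

Definition m_of (alpha j : R) (n : nat) (V : R -> R) (a b : nat -> R) (x : R) : R :=
  c_j alpha j / Rpower (trig n a b x - V x) (1 / alpha).

(* Main.v *)
Require Import Defs.
From Stdlib Require Import Reals.
From Stdlib Require Import Reals Lra Lia FunctionalExtensionality ClassicalEpsilon.
From Coquelicot Require Import Coquelicot.
Open Scope R_scope.

Lemma Rint01_RInt f : ex_RInt f 0 1 -> Rint01 f = RInt f 0 1.
Proof.
  intros H. unfold Rint01.
  destruct (ClassicalEpsilon.excluded_middle_informative _) as [e|n].
  - symmetry. apply RInt_Reals.
  - exfalso. apply n. exists (ex_RInt_Reals_0 _ _ _ H). exact I.
Qed.

Lemma exRInt_cont f : (forall x, continuity_pt f x) -> ex_RInt f 0 1.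
Proof.
  intros H. apply (@ex_RInt_continuous R_CompleteNormedModule). intros z _.
  apply continuity_pt_filterlim. apply H.
Qed.

Lemma RInt_lin2 u v c1 c2 : ex_RInt u 0 1 -> ex_RInt v 0 1 ->
  RInt (fun y => c1 * u y + c2 * v y) 0 1 = c1 * RInt u 0 1 + c2 * RInt v 0 1.
Proof.
  intros Hu Hv.
  rewrite (RInt_plus (fun y => c1 * u y) (fun y => c2 * v y)).
  - assert (E1 : RInt (fun y => c1 * u y) 0 1 = c1 * RInt u 0 1) by exact (RInt_scal u 0 1 c1 Hu).
    assert (E2 : RInt (fun y => c2 * v y) 0 1 = c2 * RInt v 0 1) by exact (RInt_scal v 0 1 c2 Hv).
    change (RInt (fun y => c1 * u y) 0 1 + RInt (fun y => c2 * v y) 0 1 = c1 * RInt u 0 1 + c2 * RInt v 0 1).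
    rewrite E1, E2. reflexivity.
  - apply (ex_RInt_scal u 0 1 c1 Hu).
  - apply (ex_RInt_scal v 0 1 c2 Hv).
Qed.

Lemma sum1_ext n f g : (forall k, (1 <= k <= n)%nat -> f k = g k) -> sum1 n f = sum1 n g.
Proof.
  induction n; intros H; simpl; [reflexivity|].
  rewrite IHn by (intros; apply H; lia). rewrite H by lia. reflexivity.
Qed.

Lemma sum1_plus n f g : sum1 n (fun k => f k + g k) = sum1 n f + sum1 n g.
Proof. induction n; simpl; [lra|]. rewrite IHn. lra. Qed.

Lemma sum1_cont n (h : nat -> R -> R) : (forall k x, continuity_pt (h k) x) ->
  forall x, continuity_pt (fun y => sum1 n (fun k => h k y)) x.
Proof.
  intros H x; induction n; simpl.
  - apply continuity_pt_const. intros u v; reflexivity.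
  - apply continuity_pt_plus; [exact IHn | apply H].
Qed.

Lemma cos_cont c x : continuity_pt (fun y => cos (c * y)) x.
Proof.
  apply (continuity_pt_comp (fun y => c * y) cos).
  - apply continuity_pt_mult; [apply continuity_pt_const; intros u v; reflexivity| apply continuity_pt_id].
  - apply continuity_cos.
Qed.

Lemma sin_cont c x : continuity_pt (fun y => sin (c * y)) x.
Proof.
  apply (continuity_pt_comp (fun y => c * y) sin).
  - apply continuity_pt_mult; [apply continuity_pt_const; intros u v; reflexivity| apply continuity_pt_id].
  - apply continuity_sin.
Qed.

Lemma trig_cont n a b x : continuity_pt (trig n a b) x.
Proof.
  unfold trig. apply continuity_pt_plus.
  - apply continuity_pt_const. intros u v; reflexivity.
  - apply (sum1_cont n (fun k y => a k * cos (2 * PI * INR k * y) + b k * sin (2 * PI * INR k * y))).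
    intros k y. apply continuity_pt_plus; apply continuity_pt_mult;
      try (apply continuity_pt_const; intros u v; reflexivity).
    apply cos_cont. apply sin_cont.
Qed.

Lemma RInt_sum1 n (f : nat -> R -> R) : (forall k, ex_RInt (f k) 0 1) ->
  ex_RInt (fun y => sum1 n (fun k => f k y)) 0 1 /\
  RInt (fun y => sum1 n (fun k => f k y)) 0 1 = sum1 n (fun k => RInt (f k) 0 1).
Proof.
  intros H. induction n; simpl.
  - split. apply (ex_RInt_const 0 1 0).
    rewrite RInt_const. unfold scal; simpl. unfold mult; simpl. ring.
  - destruct IHn as [E1 E2]. split.
    + apply (ex_RInt_plus (fun y => sum1 n (fun k => f k y)) (f (S n))); auto.
    + rewrite <- E2.
      exact (RInt_plus (fun y => sum1 n (fun k => f k y)) (f (S n)) 0 1 E1 (H (S n))).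
Qed.

Lemma trig_upd0 n a b t x : trig n (upd a 0 t) b x = trig n a b x + (t - a 0%nat) * 1.
Proof.
  unfold trig. rewrite (sum1_ext n _ (fun k => a k * cos (2 * PI * INR k * x) + b k * sin (2 * PI * INR k * x))).
  - unfold upd; simpl. ring.
  - intros k Hk. unfold upd. destruct k; [lia|]. simpl. reflexivity.
Qed.

Lemma sum_upda n a b k t x : (1 <= k)%nat ->
  sum1 n (fun i => upd a k t i * cos (2 * PI * INR i * x) + b i * sin (2 * PI * INR i * x))
  = sum1 n (fun i => a i * cos (2 * PI * INR i * x) + b i * sin (2 * PI * INR i * x))
    + (if Nat.leb k n then (t - a k) * cos (2 * PI * INR k * x) else 0).
Proof.
  intros Hk. induction n; cbn [sum1].
  - destruct k; [lia|]. simpl. ring.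
  - rewrite IHn. unfold upd.
    destruct (Nat.eqb_spec (S n) k) as [e|e].
    + subst k. assert (Nat.leb (S n) n = false) as ->. { apply Nat.leb_gt. lia. }
      rewrite Nat.leb_refl. ring.
    + destruct (Nat.leb_spec k n); destruct (Nat.leb_spec k (S n)); try lia; ring.
Qed.

Lemma sum_updb n a b k t x : (1 <= k)%nat ->
  sum1 n (fun i => a i * cos (2 * PI * INR i * x) + upd b k t i * sin (2 * PI * INR i * x))
  = sum1 n (fun i => a i * cos (2 * PI * INR i * x) + b i * sin (2 * PI * INR i * x))
    + (if Nat.leb k n then (t - b k) * sin (2 * PI * INR k * x) else 0).
Proof.
  intros Hk. induction n; cbn [sum1].
  - destruct k; [lia|]. simpl. ring.
  - rewrite IHn. unfold upd.
    destruct (Nat.eqb_spec (S n) k) as [e|e].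
    + subst k. assert (Nat.leb (S n) n = false) as ->. { apply Nat.leb_gt. lia. }
      rewrite Nat.leb_refl. ring.
    + destruct (Nat.leb_spec k n); destruct (Nat.leb_spec k (S n)); try lia; ring.
Qed.

Lemma trig_upda n a b k t x : (1 <= k <= n)%nat ->
  trig n (upd a k t) b x = trig n a b x + (t - a k) * cos (2 * PI * INR k * x).
Proof.
  intros Hk. unfold trig. rewrite sum_upda by lia.
  assert (Nat.leb k n = true) as -> by (apply Nat.leb_le; lia).
  unfold upd. destruct k; [lia|]. simpl. ring.
Qed.

Lemma trig_updb n a b k t x : (1 <= k <= n)%nat ->
  trig n a (upd b k t) x = trig n a b x + (t - b k) * sin (2 * PI * INR k * x).
Proof.
  intros Hk. unfold trig. rewrite sum_updb by lia.
  assert (Nat.leb k n = true) as -> by (apply Nat.leb_le; lia).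
  ring.
Qed.

Lemma trig_periodic n a b : periodic1 (trig n a b).
Proof.
  intros x. unfold trig. f_equal. apply sum1_ext. intros k _.
  replace (2 * PI * INR k * (x + 1)) with (2 * PI * INR k * x + 2 * INR k * PI) by ring.
  rewrite cos_period, sin_period. reflexivity.
Qed.

Definition dphi (alpha j s : R) : R := c_j alpha j * Rpower s (- (1 / alpha)).

Lemma phi_deriv alpha j s : 0 < alpha -> 0 < s ->
  derivable_pt_lim (phi alpha j) s (dphi alpha j s).
Proof.
  intros Ha Hs. unfold phi, dphi.
  destruct (Req_EM_T alpha 1) as [e|ne].
  - subst alpha. replace (Rpower s (- (1/1))) with (/ s).
    + apply (derivable_pt_lim_scal ln (c_j 1 j) s (/ s)). apply derivable_pt_lim_ln; lra.
    + replace (1/1) with 1 by field. rewrite Rpower_Ropp, Rpower_1 by lra. reflexivity.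
  - set (K := c_j alpha j * alpha / (alpha - 1)).
    replace (c_j alpha j * Rpower s (- (1 / alpha)))
      with (K * ((alpha - 1) / alpha * Rpower s ((alpha - 1) / alpha - 1))).
    + apply (derivable_pt_lim_scal (fun t => Rpower t ((alpha - 1) / alpha)) K s).
      apply derivable_pt_lim_power; lra.
    + unfold K. replace ((alpha - 1) / alpha - 1) with (- (1 / alpha)) by (field; lra).
      field. split; lra.
Qed.

Lemma phi_cont alpha j s : 0 < alpha -> 0 < s -> continuity_pt (phi alpha j) s.
Proof.
  intros Ha Hs. apply derivable_continuous_pt. exists (dphi alpha j s).
  apply phi_deriv; auto.
Qed.

Lemma Rpower_cont y s : 0 < s -> continuity_pt (fun x => Rpower x y) s.
Proof.
  intros Hs. apply derivable_continuous_pt. eexists. apply derivable_pt_lim_power; auto.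
Qed.

Lemma dphi_cont alpha j s : 0 < s -> continuity_pt (dphi alpha j) s.
Proof.
  intros Hs. unfold dphi. apply continuity_pt_mult.
  - apply continuity_pt_const. intros u v; reflexivity.
  - apply Rpower_cont; auto.
Qed.

Lemma pos_bound (F g : R -> R) t0 m0 u w : Rabs (g w) <= 1 -> m0 <= F w -> Rabs (u - t0) < m0 / 2 ->
  m0 / 2 < F w + (u - t0) * g w.
Proof.
  intros Hg HF Hu.
  assert (Rabs ((u - t0) * g w) < m0 / 2).
  { rewrite Rabs_mult. apply Rle_lt_trans with (Rabs (u - t0) * 1).
    - apply Rmult_le_compat_l; auto. apply Rabs_pos.
    - lra. }
  apply Rabs_def2 in H. lra.
Qed.

Lemma param_deriv alpha j (F g : R -> R) t0 :
  0 < alpha -> (forall x, continuity_pt F x) -> (forall x, continuity_pt g x) ->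
  (forall x, Rabs (g x) <= 1) -> (forall x, 0 < F x) ->
  derivable_pt_lim (fun t => Rint01 (fun w => phi alpha j (F w + (t - t0) * g w))) t0
    (Rint01 (fun w => dphi alpha j (F w) * g w)).
Proof.
  intros Ha HF Hg Hg1 Hpos.
  destruct (continuity_ab_min F 0 1) as [mx [Hmx Hmx01]]; [lra| intros; apply HF|].
  set (m0 := F mx). assert (Hm0 : 0 < m0) by apply Hpos.
  set (f := fun u w => phi alpha j (F w + (u - t0) * g w)).
  assert (Hdf : forall u w, 0 < F w + (u - t0) * g w ->
            is_derive (fun z => f z w) u (dphi alpha j (F w + (u - t0) * g w) * g w)).
  { intros u w Hp. unfold f.
    assert (E := is_derive_comp (phi alpha j) (fun z => F w + (z - t0) * g w) u
                   (dphi alpha j (F w + (u - t0) * g w)) (g w)).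
    replace (dphi alpha j (F w + (u - t0) * g w) * g w)
      with (scal (g w) (dphi alpha j (F w + (u - t0) * g w)))
      by (unfold scal; simpl; unfold mult; simpl; ring).
    apply E.
    - apply is_derive_Reals. apply phi_deriv; auto.
    - auto_derive; auto. ring. }
  assert (Hball : forall y, ball t0 (mkposreal (m0/2) ltac:(lra)) y -> forall w, 0 <= w <= 1 ->
            m0 / 2 < F w + (y - t0) * g w).
  { intros y Hy w Hw. apply pos_bound; [apply Hg1| apply Hmx; auto| exact Hy]. }
  assert (Hex : forall y, ball t0 (mkposreal (m0/2) ltac:(lra)) y -> ex_RInt (fun w => f y w) 0 1).
  { intros y Hy. apply (@ex_RInt_continuous R_CompleteNormedModule).
    rewrite Rmin_left, Rmax_right by lra. intros z Hz.
    apply continuity_pt_filterlim. unfold f.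
    apply (continuity_pt_comp (fun w => F w + (y - t0) * g w) (phi alpha j)).
    - apply continuity_pt_plus; auto. apply continuity_pt_mult; auto.
      apply continuity_pt_const; intros u v; reflexivity.
    - apply phi_cont; auto. specialize (Hball y Hy z Hz). lra. }
  assert (HI : forall x y, continuity_2d_pt (fun u v => F v + (u - t0) * g v) x y).
  { intros x y. apply continuity_2d_pt_plus.
    - apply (continuity_1d_2d_pt_comp F (fun _ v => v)); [apply HF| apply continuity_2d_pt_id2].
    - apply continuity_2d_pt_mult.
      + apply continuity_2d_pt_minus; [apply continuity_2d_pt_id1| apply continuity_2d_pt_const].
      + apply (continuity_1d_2d_pt_comp g (fun _ v => v)); [apply Hg| apply continuity_2d_pt_id2]. }
  assert (Hmain : is_derive (fun x0 => RInt (fun t => f x0 t) 0 1) t0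
                    (RInt (fun t => Derive (fun u => f u t) t0) 0 1)).
  { apply is_derive_RInt_param.
    - exists (mkposreal (m0/2) ltac:(lra)). intros y Hy t Ht.
      rewrite Rmin_left, Rmax_right in Ht by lra.
      eexists. apply Hdf. specialize (Hball y Hy t Ht). lra.
    - intros t Ht. rewrite Rmin_left, Rmax_right in Ht by lra.
      apply continuity_2d_pt_ext_loc with
        (f := fun u v => dphi alpha j (F v + (u - t0) * g v) * g v).
      + assert (Hc := HI t0 t (mkposreal (F t / 2) ltac:(pose proof (Hpos t); lra))).
        eapply locally_2d_impl; [|exact Hc].
        apply locally_2d_forall. intros u v Huv. simpl in Huv.
        replace (F t + (t0 - t0) * g t) with (F t) in Huv by ring.
        symmetry. apply is_derive_unique. apply Hdf.
        apply Rabs_def2 in Huv. pose proof (Hpos t). lra.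
      + apply continuity_2d_pt_mult.
        * apply (continuity_1d_2d_pt_comp (dphi alpha j) (fun u v => F v + (u - t0) * g v)).
          -- apply dphi_cont. replace (F t + (t0 - t0) * g t) with (F t) by ring. apply Hpos.
          -- apply HI.
        * apply (continuity_1d_2d_pt_comp g (fun _ v => v)); [apply Hg| apply continuity_2d_pt_id2].
    - exists (mkposreal (m0/2) ltac:(lra)). intros y Hy. apply Hex; auto. }
  apply is_derive_Reals.
  replace (Rint01 (fun w => dphi alpha j (F w) * g w))
    with (RInt (fun t => Derive (fun u => f u t) t0) 0 1).
  - apply (is_derive_ext_loc (fun x0 => RInt (fun t => f x0 t) 0 1)); [|exact Hmain].
    exists (mkposreal (m0/2) ltac:(lra)). intros y Hy. symmetry. apply Rint01_RInt. apply Hex; auto.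
  - rewrite Rint01_RInt.
    + apply RInt_ext. intros x _.
      assert (Hx : 0 < F x + (t0 - t0) * g x) by (replace (F x + (t0 - t0) * g x) with (F x) by ring; apply Hpos).
      pose proof (is_derive_unique _ _ _ (Hdf t0 x Hx)) as HD. simpl in HD |- *. rewrite HD.
      replace (F x + (t0 - t0) * g x) with (F x) by ring. reflexivity.
    + apply exRInt_cont. intros x. apply continuity_pt_mult; auto.
      apply (continuity_pt_comp F (dphi alpha j)); auto. apply dphi_cont; auto.
Qed.

Lemma mof_dphi alpha j n V a b w :
  m_of alpha j n V a b w = dphi alpha j (trig n a b w - V w).
Proof. unfold m_of, dphi. rewrite Rpower_Ropp. reflexivity. Qed.

Lemma cos_abs x : Rabs (cos x) <= 1.
Proof. apply Rabs_le. apply COS_bound. Qed.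
Lemma sin_abs x : Rabs (sin x) <= 1.
Proof. apply Rabs_le. apply SIN_bound. Qed.

Lemma V_F_cont n a b V : (forall x, continuity_pt V x) ->
  forall x, continuity_pt (fun w => trig n a b w - V w) x.
Proof. intros HV x. apply continuity_pt_minus; auto. apply trig_cont. Qed.

Lemma D0 alpha j n V a b : 0 < alpha -> inC n V a b -> (forall x, continuity_pt V x) ->
  derivable_pt_lim (fun t => Phi alpha j n V (upd a 0 t) b) (a 0%nat)
    (Rint01 (m_of alpha j n V a b)).
Proof.
  intros Ha HC HV.
  replace (fun t => Phi alpha j n V (upd a 0 t) b) with
    (fun t => Rint01 (fun w => phi alpha j ((trig n a b w - V w) + (t - a 0%nat) * 1))).
  - replace (Rint01 (m_of alpha j n V a b)) with
      (Rint01 (fun w => dphi alpha j (trig n a b w - V w) * 1)).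
    + apply (param_deriv alpha j (fun w => trig n a b w - V w) (fun _ => 1)).
      * exact Ha.
      * apply V_F_cont; auto.
      * intros; apply continuity_pt_const; intros u v; reflexivity.
      * intros; rewrite Rabs_R1; lra.
      * intros x. apply HC.
    + f_equal. apply functional_extensionality. intros w. rewrite mof_dphi. ring.
  - apply functional_extensionality. intros t. unfold Phi. f_equal.
    apply functional_extensionality. intros w. rewrite trig_upd0. f_equal. ring.
Qed.

Lemma Dcos alpha j n V a b k : 0 < alpha -> inC n V a b -> (forall x, continuity_pt V x) ->
  (1 <= k <= n)%nat ->
  derivable_pt_lim (fun t => Phi alpha j n V (upd a k t) b) (a k)
    (Rint01 (fun w => m_of alpha j n V a b w * cos (2 * PI * INR k * w))).
Proof.
  intros Ha HC HV Hk.
  replace (fun t => Phi alpha j n V (upd a k t) b) with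
    (fun t => Rint01 (fun w => phi alpha j ((trig n a b w - V w) + (t - a k) * cos (2 * PI * INR k * w)))).
  - replace (Rint01 (fun w => m_of alpha j n V a b w * cos (2 * PI * INR k * w))) with
      (Rint01 (fun w => dphi alpha j (trig n a b w - V w) * cos (2 * PI * INR k * w))).
    + apply (param_deriv alpha j (fun w => trig n a b w - V w) (fun w => cos (2 * PI * INR k * w))).
      * exact Ha.
      * apply V_F_cont; auto.
      * intros; apply cos_cont.
      * intros; apply cos_abs.
      * intros x. apply HC.
    + f_equal. apply functional_extensionality. intros w. rewrite mof_dphi. ring.
  - apply functional_extensionality. intros t. unfold Phi. f_equal.
    apply functional_extensionality. intros w. rewrite trig_upda by auto. f_equal. ring.
Qed.

Lemma Dsin alpha j n V a b k : 0 < alpha -> inC n V a b -> (forall x, continuity_pt V x) ->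
  (1 <= k <= n)%nat ->
  derivable_pt_lim (fun t => Phi alpha j n V a (upd b k t)) (b k)
    (Rint01 (fun w => m_of alpha j n V a b w * sin (2 * PI * INR k * w))).
Proof.
  intros Ha HC HV Hk.
  replace (fun t => Phi alpha j n V a (upd b k t)) with
    (fun t => Rint01 (fun w => phi alpha j ((trig n a b w - V w) + (t - b k) * sin (2 * PI * INR k * w)))).
  - replace (Rint01 (fun w => m_of alpha j n V a b w * sin (2 * PI * INR k * w))) with
      (Rint01 (fun w => dphi alpha j (trig n a b w - V w) * sin (2 * PI * INR k * w))).
    + apply (param_deriv alpha j (fun w => trig n a b w - V w) (fun w => sin (2 * PI * INR k * w))).
      * exact Ha.
      * apply V_F_cont; auto.
      * intros; apply sin_cont.
      * intros; apply sin_abs.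
      * intros x. apply HC.
    + f_equal. apply functional_extensionality. intros w. rewrite mof_dphi. ring.
  - apply functional_extensionality. intros t. unfold Phi. f_equal.
    apply functional_extensionality. intros w. rewrite trig_updb by auto. f_equal. ring.
Qed.

Lemma sum1_mult_r n f c : sum1 n f * c = sum1 n (fun k => f k * c).
Proof. induction n; cbn [sum1]; [ring|]. rewrite <- IHn. ring. Qed.

Lemma RInt_plus' u v : ex_RInt u 0 1 -> ex_RInt v 0 1 ->
  RInt (fun y => u y + v y) 0 1 = RInt u 0 1 + RInt v 0 1.
Proof. intros; exact (RInt_plus u v 0 1 H H0). Qed.

Lemma Conv n p q m x : (forall y, continuity_pt m y) ->
  Rint01 (fun y => trig n p q (x - y) * m y) =
  p 0%nat * Rint01 m + sum1 n (fun k =>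
     (p k * Rint01 (fun y => m y * cos (2 * PI * INR k * y))
      - q k * Rint01 (fun y => m y * sin (2 * PI * INR k * y))) * cos (2 * PI * INR k * x)
   + (p k * Rint01 (fun y => m y * sin (2 * PI * INR k * y))
      + q k * Rint01 (fun y => m y * cos (2 * PI * INR k * y))) * sin (2 * PI * INR k * x)).
Proof.
  intros Hm.
  assert (Hc : forall k, ex_RInt (fun y => m y * cos (2 * PI * INR k * y)) 0 1).
  { intros k. apply exRInt_cont. intros y. apply continuity_pt_mult; auto. apply cos_cont. }
  assert (Hs : forall k, ex_RInt (fun y => m y * sin (2 * PI * INR k * y)) 0 1).
  { intros k. apply exRInt_cont. intros y. apply continuity_pt_mult; auto. apply sin_cont. }
  assert (Hm1 : ex_RInt m 0 1) by (apply exRInt_cont; auto).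
  set (A := fun k => p k * cos (2 * PI * INR k * x) + q k * sin (2 * PI * INR k * x)).
  set (B := fun k => p k * sin (2 * PI * INR k * x) - q k * cos (2 * PI * INR k * x)).
  set (h := fun k y => A k * (m y * cos (2 * PI * INR k * y)) + B k * (m y * sin (2 * PI * INR k * y))).
  assert (Hh : forall k, ex_RInt (h k) 0 1).
  { intros k. unfold h. apply (ex_RInt_plus (fun y => A k * (m y * cos (2 * PI * INR k * y)))
                                  (fun y => B k * (m y * sin (2 * PI * INR k * y)))).
    exact (ex_RInt_scal _ 0 1 (A k) (Hc k)). exact (ex_RInt_scal _ 0 1 (B k) (Hs k)). }
  destruct (RInt_sum1 n h Hh) as [Ex1 Eq1].
  assert (Hm2 : ex_RInt (fun y => p 0%nat * m y) 0 1) by (apply (ex_RInt_scal m 0 1 (p 0%nat)); auto).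
  rewrite Rint01_RInt.
  - rewrite (RInt_ext _ (fun y => p 0%nat * m y + sum1 n (fun k => h k y))).
    + rewrite RInt_plus' by auto. rewrite Eq1.
      assert (E1 : RInt (fun y => p 0%nat * m y) 0 1 = p 0%nat * RInt m 0 1) by exact (RInt_scal m 0 1 (p 0%nat) Hm1).
      rewrite E1, (Rint01_RInt m Hm1). f_equal.
      apply sum1_ext. intros k _. unfold h. rewrite RInt_lin2 by auto.
      rewrite !Rint01_RInt by auto. unfold A, B. ring.
    + intros y _. unfold trig. rewrite Rmult_plus_distr_r, sum1_mult_r. f_equal.
      apply sum1_ext. intros k _. unfold h, A, B.
      replace (2 * PI * INR k * (x - y)) with (2 * PI * INR k * x - 2 * PI * INR k * y) by ring.
      rewrite cos_minus, sin_minus. ring.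
  - apply exRInt_cont. intros y. apply continuity_pt_mult; auto.
    apply (continuity_pt_comp (fun y => x - y) (trig n p q)); [|apply trig_cont].
    apply continuity_pt_minus; [apply continuity_pt_const; intros u v; reflexivity| apply continuity_pt_id].
Qed.

Lemma Rpower_div u v y : 0 < u -> 0 < v -> Rpower (u / v) y = Rpower u y / Rpower v y.
Proof.
  intros Hu Hv. unfold Rpower. rewrite ln_div by auto.
  replace (y * (ln u - ln v)) with (y * ln u + - (y * ln v)) by ring.
  rewrite exp_plus, exp_Ropp. reflexivity.
Qed.

Lemma Rpower_pos x y : 0 < Rpower x y.
Proof. unfold Rpower. apply exp_pos. Qed.

Lemma Rpower_inv_alpha u alpha : 0 < u -> 0 < alpha -> Rpower (Rpower u (1 / alpha)) alpha = u.
Proof.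
  intros Hu Ha. rewrite Rpower_mult. replace (1 / alpha * alpha) with 1 by (field; lra).
  apply Rpower_1; auto.
Qed.

Lemma Rpower_inv_alpha' u alpha : 0 < u -> 0 < alpha -> Rpower (Rpower u alpha) (1 / alpha) = u.
Proof.
  intros Hu Ha. rewrite Rpower_mult. replace (alpha * (1 / alpha)) with 1 by (field; lra).
  apply Rpower_1; auto.
Qed.

Lemma j2pos j : j <> 0 -> 0 < j ^ 2 / 2.
Proof. intros H. assert (0 < j ^ 2) by (simpl; rewrite Rmult_1_r; apply Rsqr_pos_lt; auto). lra. Qed.

Lemma mof_eq alpha j s : 0 < alpha -> j <> 0 -> 0 < s ->
  j ^ 2 / (2 * Rpower (c_j alpha j / Rpower s (1 / alpha)) alpha) = s.
Proof.
  intros Ha Hj Hs. unfold c_j. pose proof (j2pos j Hj).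
  rewrite Rpower_div by apply Rpower_pos.
  rewrite !Rpower_inv_alpha by auto. field. split; lra.
Qed.

Lemma m_recover alpha j mx : 0 < alpha -> j <> 0 -> 0 < mx ->
  mx = c_j alpha j / Rpower (j ^ 2 / (2 * Rpower mx alpha)) (1 / alpha).
Proof.
  intros Ha Hj Hm. unfold c_j. pose proof (j2pos j Hj).
  replace (j ^ 2 / (2 * Rpower mx alpha)) with ((j ^ 2 / 2) / Rpower mx alpha)
    by (field; pose proof (Rpower_pos mx alpha); lra).
  rewrite (Rpower_div (j ^ 2 / 2) (Rpower mx alpha)) by (auto; apply Rpower_pos).
  rewrite Rpower_inv_alpha' by auto.
  pose proof (Rpower_pos (j ^ 2 / 2) (1 / alpha)). field. lra.
Qed.

Theorem proposition4p1 (alpha j : R) (n : nat) (V : R -> R) (p q : nat -> R) :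
  0 < alpha <= 2 -> j <> 0 -> C2_periodic V ->
  (forall k, (1 <= k <= n)%nat -> p k ^ 2 + q k ^ 2 > 0) ->
  (forall (m : R -> R) (H : R),
      solvesP alpha j V (trig n p q) m H ->
      exists a b : nat -> R,
        inC n V a b /\ solvesS alpha j n V p q a b /\
        (forall x, m x = m_of alpha j n V a b x) /\ H = a 0%nat - p 0%nat) /\
  (forall a b : nat -> R,
      inC n V a b -> solvesS alpha j n V p q a b ->
      solvesP alpha j V (trig n p q) (m_of alpha j n V a b) (a 0%nat - p 0%nat)).
Proof.
  intros [Ha _] Hj [Vper [V' [V'' [HV' _]]]] Hpq.
  assert (HV : forall x, continuity_pt V x).
  { intros x. apply derivable_continuous_pt. exists (V' x). apply HV'. }
  split.
  - intros m H [Hmc [Hmper [Hmpos [Hm1 Heq]]]].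
    set (C := fun k => Rint01 (fun y => m y * cos (2 * PI * INR k * y))).
    set (S := fun k => Rint01 (fun y => m y * sin (2 * PI * INR k * y))).
    set (a := fun k => match k with O => p O + H | _ => p k * C k - q k * S k end).
    set (b := fun k => p k * S k + q k * C k).
    assert (Htr : forall x, trig n a b x - V x = j ^ 2 / (2 * Rpower (m x) alpha)).
    { intros x. specialize (Heq x). rewrite Conv in Heq by auto. rewrite Hm1 in Heq.
      unfold trig.
      rewrite (sum1_ext n _ (fun k =>
        (p k * C k - q k * S k) * cos (2 * PI * INR k * x)
        + (p k * S k + q k * C k) * sin (2 * PI * INR k * x))).
      - unfold C, S. simpl (a 0%nat). lra.
      - intros k Hk. destruct k; [lia|]. reflexivity. }
    assert (Hspos : forall x, 0 < j ^ 2 / (2 * Rpower (m x) alpha)).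
    { intros x. pose proof (j2pos j Hj). pose proof (Rpower_pos (m x) alpha).
      apply Rdiv_lt_0_compat; lra. }
    assert (HIC : inC n V a b).
    { intros x. rewrite Htr. apply Rlt_gt. apply Hspos. }
    assert (Hmeq : forall x, m x = m_of alpha j n V a b x).
    { intros x. unfold m_of. rewrite Htr. apply m_recover; auto. }
    assert (Hfun : m_of alpha j n V a b = m) by (apply functional_extensionality; intros; auto).
    exists a, b. split; [exact HIC|]. split; [|split; [exact Hmeq| simpl; ring]].
    split.
    + rewrite <- Hm1. rewrite <- Hfun. apply D0; auto.
    + intros k Hk. specialize (Hpq k Hk). split.
      * replace ((p k * a k + q k * b k) / (p k ^ 2 + q k ^ 2))
          with (Rint01 (fun w => m_of alpha j n V a b w * cos (2 * PI * INR k * w))).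
        -- apply Dcos; auto.
        -- rewrite Hfun. fold (C k). unfold a, b. destruct k; [lia|].
           field. lra.
      * replace ((p k * b k - q k * a k) / (p k ^ 2 + q k ^ 2))
          with (Rint01 (fun w => m_of alpha j n V a b w * sin (2 * PI * INR k * w))).
        -- apply Dsin; auto.
        -- rewrite Hfun. fold (S k). unfold a, b. destruct k; [lia|].
           field. lra.
  - intros a b HIC [S0 SK].
    assert (Hmc : forall x, continuity_pt (m_of alpha j n V a b) x).
    { intros x. replace (m_of alpha j n V a b) with (fun w => dphi alpha j (trig n a b w - V w)).
      - apply (continuity_pt_comp (fun w => trig n a b w - V w) (dphi alpha j)).
        + apply V_F_cont; auto.
        + apply dphi_cont. apply HIC.
      - apply functional_extensionality. intros w. rewrite mof_dphi. reflexivity. }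
    assert (Hm1 : Rint01 (m_of alpha j n V a b) = 1).
    { apply (uniqueness_limite _ _ _ _ (D0 alpha j n V a b Ha HIC HV) S0). }
    split; [exact Hmc|]. split.
    { intros x. unfold m_of. rewrite trig_periodic, Vper. reflexivity. }
    split.
    { intros x. unfold m_of. apply Rdiv_lt_0_compat.
      - unfold c_j. apply Rpower_pos.
      - apply Rpower_pos. }
    split; [exact Hm1|].
    intros x. rewrite Conv by auto. rewrite Hm1.
    assert (EL : j ^ 2 / (2 * Rpower (m_of alpha j n V a b x) alpha) = trig n a b x - V x).
    { unfold m_of. apply mof_eq; auto. apply HIC. }
    rewrite EL.
    match goal with |- _ = _ + sum1 n ?f + _ =>
      rewrite (sum1_ext n f (fun k => a k * cos (2 * PI * INR k * x) + b k * sin (2 * PI * INR k * x))) end.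
    + unfold trig. ring.
    + intros k Hk. destruct (SK k Hk) as [Dc Ds].
      pose proof (uniqueness_limite _ _ _ _ (Dcos alpha j n V a b k Ha HIC HV Hk) Dc) as Ec.
      pose proof (uniqueness_limite _ _ _ _ (Dsin alpha j n V a b k Ha HIC HV Hk) Ds) as Es.
      rewrite Ec, Es. specialize (Hpq k Hk).
      field. lra.
Qed.
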